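(* Let $P$ and $Q$ be finite posets with $\mathbb{E}(\mathrm{uni}_P;\mathrm{ddeg})=\mathbb{E}(\mathrm{uni}_Q;\mathrm{ddeg})$. If $P$ and $Q$ are both CDE then the disjoint union $P+Q$ is CDE. If $P$ and $Q$ are both mCDE then $P+Q$ is mCDE.
   Context: All posets are finite. $\mathbb{E}(\mu;f)=\sum_p f(p)\mathbb{P}(\mu;p)$. $\mathrm{ddeg}(p)$ is the number of elements covered by $p$; $\mathrm{uni}_P$ is the uniform distribution on $P$. $\mathrm{maxchain}_P$ is the distribution on $P$ giving each $p$ probability proportional to the number of maximal chains of $P$ containing $p$. $P$ is CDE if $\mathbb{E}(\mathrm{maxchain}_P;\mathrm{ddeg})=\mathbb{E}(\mathrm{uni}_P;\mathrm{ddeg})$. A $k$-chain is $c_0<\cdots<c_k$; $\mathrm{chain}(k)_P$ gives $p$ probability $\#\{k\text{-chains }c\ni p\}/((k+1)\#\{k\text{-chains}\})$. If $r$ is the length of a longest chain in $P$, $P$ is mCDE if $\mathbb{E}(\mathrm{chain}(k)_P;\mathrm{ddeg})=\mathbb{E}(\mathrm{uni}_P;\mathrm{ddeg})$ for all $k=0,\ldots,r$. $P+Q$ is the disjoint union, with $x\le y$ iff both lie in $P$ and $x\le_P y$ or both lie in $Q$ and $x\le_Q y$. *)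

(* Defs.v *)
From HB Require Import structures.
From mathcomp Require Import all_boot all_order all_algebra.
Set Implicit Arguments. Unset Strict Implicit. Unset Printing Implicit Defensive.
Import Order.TTheory GRing.Theory Num.Theory.

Local Open Scope order_scope.

Section PosetNotions.
Context {disp : Order.disp_t} {T : finPOrderType disp}.

Definition covers (x y : T) : bool :=
  (y < x) && [forall z : T, ~~ ((y < z) && (z < x))].

Definition ddeg (p : T) : nat := #|[set q : T | covers p q]|.

Definition is_chain (c : {set T}) : bool :=
  [forall x in c, forall y in c, (x <= y) || (y <= x)].

Definition is_maxchain (c : {set T}) : bool :=
  is_chain c && [forall c' : {set T}, (is_chain c' && (c \subset c')) ==> (c' == c)].

(* k-chain c_0 < ... < c_k, represented by its (k+1)-element underlying set *)
Definition is_kchain (k : nat) (c : {set T}) : bool :=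
  is_chain c && (#|c| == k.+1)%N.

Definition poset_rank : nat := (\max_(c : {set T} | is_chain c) #|c|.-1)%N.

Local Open Scope ring_scope.

Definition E_uni : rat := (\sum_(p : T) (ddeg p)%:R) / #|T|%:R.

Definition nmax (p : T) : nat := #|[set c : {set T} | is_maxchain c && (p \in c)]|.
Definition E_maxchain : rat :=
  \sum_(p : T) (ddeg p)%:R * ((nmax p)%:R / (\sum_(q : T) (nmax q)%:R)).

Definition nkchain (k : nat) (p : T) : nat :=
  #|[set c : {set T} | is_kchain k c && (p \in c)]|.
Definition E_chain (k : nat) : rat :=
  \sum_(p : T) (ddeg p)%:R *
     ((nkchain k p)%:R / ((k.+1)%:R * (#|[set c : {set T} | is_kchain k c]|)%:R)).

Definition CDE : Prop := E_maxchain = E_uni.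
Definition mCDE : Prop := forall k : nat, (k <= poset_rank)%N -> E_chain k = E_uni.

End PosetNotions.

Arguments ddeg {disp T}.
Arguments E_uni {disp} T.
Arguments E_maxchain {disp} T.
Arguments E_chain {disp} T k.
Arguments CDE {disp} T.
Arguments mCDE {disp} T.

Section DisjointUnion.
Context {d1 d2 : Order.disp_t} (P : finPOrderType d1) (Q : finPOrderType d2).

Definition dsum : Type := (P + Q)%type.
HB.instance Definition _ := Finite.on dsum.

Definition dsum_le (x y : dsum) : bool :=
  match x, y with
  | inl a, inl b => (a <= b)%O
  | inr a, inr b => (a <= b)%O
  | _, _ => false
  end.
Definition dsum_lt (x y : dsum) : bool :=
  match x, y with
  | inl a, inl b => (a < b)%O
  | inr a, inr b => (a < b)%O
  | _, _ => false
  end.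

Lemma dsum_lt_def x y : dsum_lt x y = (y != x) && dsum_le x y.
Proof. by case: x y => a [] b //=; rewrite ?lt_def //; case: (_ != _). Qed.
Lemma dsum_le_refl : reflexive dsum_le.
Proof. by case=> a /=. Qed.
Lemma dsum_le_anti : antisymmetric dsum_le.
Proof. by case=> a [] b //= /le_anti ->. Qed.
Lemma dsum_le_trans : transitive dsum_le.
Proof. by case=> a [] b [] c //=; apply: le_trans. Qed.

HB.instance Definition _ := Order.isPOrder.Build (Order.Disp tt tt) dsum
  dsum_lt_def dsum_le_refl dsum_le_anti dsum_le_trans.

End DisjointUnion.

(* Main.v *)
Require Import Defs.
From HB Require Import structures.
From mathcomp Require Import all_boot all_order all_algebra.
Set Implicit Arguments. Unset Strict Implicit. Unset Printing Implicit Defensive.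
Import Order.TTheory GRing.Theory Num.Theory.

Module EmbM.
Local Open Scope order_scope.
Section Emb.
Context {dU dT : Order.disp_t} {U : finPOrderType dU} {T : finPOrderType dT}.
Variable f : U -> T.
Hypothesis finj : injective f.
Hypothesis fle : forall a b, (f a <= f b) = (a <= b).
Hypothesis fcl : forall a y, (f a <= y) || (y <= f a) -> exists b, y = f b.

Lemma flt a b : (f a < f b) = (a < b).
Proof. by rewrite !lt_def fle (inj_eq finj). Qed.

Lemma fcl_lt a y : (f a < y) || (y < f a) -> exists b, y = f b.
Proof. by move=> H; apply: (fcl (a:=a)); case/orP: H => /ltW ->; rewrite ?orbT. Qed.

Lemma covers_f a b : covers (f a) (f b) = covers a b.
Proof.
rewrite /covers flt; case: (b < a) => //=.
apply/forallP/forallP => H z.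
  by have := H (f z); rewrite !flt.
apply/negP => /andP [h1 h2].
have [c zc] : exists c, z = f c by apply: (fcl_lt (a:=b)); rewrite h1.
subst z; by move: h1 h2; rewrite !flt => h1 h2; move: (H c); rewrite h1 h2.
Qed.

Lemma ddeg_f a : ddeg (f a) = ddeg a.
Proof.
rewrite /ddeg -(card_imset _ finj); apply: eq_card => y.
rewrite inE; apply/idP/imsetP.
  move=> Hc; have [b yb] : exists b, y = f b.
    apply: (fcl_lt (a:=a)); move: Hc => /andP [->]; by rewrite orbT.
  by subst y; exists b; rewrite // inE -covers_f.
by case=> b; rewrite inE => Hb ->; rewrite covers_f.
Qed.

Lemma chain_f (c : {set U}) : is_chain (f @: c) = is_chain c.
Proof.
apply/forall_inP/forall_inP => H x xc.
  apply/forall_inP => y yc; have := H (f x) (imset_f _ xc).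
  by move/forall_inP/(_ (f y) (imset_f _ yc)); rewrite !fle.
case/imsetP: xc => x' x'c ->; apply/forall_inP => y /imsetP [y' y'c ->].
by rewrite !fle; move/forall_inP: (H x' x'c); apply.
Qed.

Lemma chain_pre (c : {set T}) a : is_chain c -> f a \in c -> c = f @: (f @^-1: c).
Proof.
move=> Hc ac; apply/setP => y; apply/idP/imsetP.
  move=> yc; have [b eb] : exists b, y = f b.
    by apply: (fcl (a:=a)); move/forall_inP: Hc => /(_ _ ac)/forall_inP; apply.
  by exists b; rewrite // inE -eb.
by case=> b; rewrite inE => Hb ->.
Qed.

Lemma card_f (c : {set U}) : #|f @: c| = #|c|.
Proof. exact: card_imset. Qed.

Lemma kchain_set k a : [set c : {set T} | is_kchain k c && (f a \in c)] =
   [set (f @: c0) | c0 : {set U} in [set c : {set U} | is_kchain k c && (a \in c)]].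
Proof.
apply/setP => c; rewrite inE; apply/idP/imsetP.
  case/andP => /andP [Hc Hk] ac; exists (f @^-1: c).
    rewrite inE /is_kchain -chain_f -card_f -(chain_pre Hc ac) Hc Hk /=.
    by rewrite inE.
  exact: chain_pre Hc ac.
case=> c0; rewrite inE => /andP [/andP [H1 H2] H3] ->.
by rewrite /is_kchain chain_f card_f H1 H2 (mem_imset _ _ finj).
Qed.

Lemma nkchain_f k a : nkchain k (f a) = nkchain k a.
Proof. by rewrite /nkchain kchain_set card_imset //; apply: imset_inj. Qed.

Lemma maxchain_f (c : {set U}) a : a \in c -> is_maxchain (f @: c) = is_maxchain c.
Proof.
move=> ac; rewrite /is_maxchain chain_f; case Hc: (is_chain c) => //=.
apply/forallP/forallP => H c'.
  apply/implyP => /andP [H1 H2]; have := H (f @: c').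
  rewrite chain_f H1 imsetS //= => /eqP /imset_inj -> //.
apply/implyP => /andP [H1 H2].
have fac : f a \in c' by apply: (subsetP H2); apply: imset_f.
have e := chain_pre H1 fac.
have sub : c \subset f @^-1: c' by apply/subsetP => x xc; rewrite inE (subsetP H2) // imset_f.
have := implyP (H (f @^-1: c')); rewrite -chain_f -e H1 sub => /(_ isT) /eqP ec.
by rewrite e ec.
Qed.

Lemma nmax_f a : nmax (f a) = nmax a.
Proof.
rewrite /nmax -(card_imset _ (imset_inj finj)); apply: eq_card => c.
rewrite inE; apply/idP/imsetP.
  case/andP => Hm ac; have Hc : is_chain c by case/andP: Hm.
  exists (f @^-1: c); last exact: chain_pre Hc ac.
  have ap : a \in f @^-1: c by rewrite inE.
  by rewrite inE -(maxchain_f ap) -(chain_pre Hc ac) Hm ap.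
case=> c0; rewrite inE => /andP [H1 H2] ->.
by rewrite (maxchain_f H2) H1 mem_imset.
Qed.

Lemma rank_chain (c : {set T}) a : is_chain c -> f a \in c -> (#|c|.-1 <= poset_rank (T:=U))%N.
Proof.
move=> Hc ac; rewrite (chain_pre Hc ac) card_f.
rewrite /poset_rank; apply: (@leq_bigmax_cond _ (fun c : {set U} => is_chain c) (fun c : {set U} => #|c|.-1)).
by rewrite -chain_f -(chain_pre Hc ac).
Qed.

End Emb.
End EmbM.
Import EmbM.
Section Gen.
Context {d : Order.disp_t} {T : finPOrderType d}.

Definition weighted (w : T -> nat) : rat :=
  (\sum_(p : T) (ddeg p)%:R * ((w p)%:R / (\sum_(q : T) (w q)%:R)))%R.

Lemma weightedE w : weighted w =
  ((\sum_(p : T) (ddeg p * w p)%N)%:R / (\sum_(q : T) w q)%:R)%R.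
Proof.
rewrite /weighted natr_sum mulr_suml natr_sum; apply: eq_bigr => p _.
by rewrite natrM mulrA.
Qed.

Lemma E_uniE : E_uni T = ((\sum_(p : T) ddeg p)%:R / #|T|%:R)%R.
Proof. by rewrite /E_uni natr_sum. Qed.

Lemma chain_rank (c : {set T}) : is_chain c -> (#|c|.-1 <= poset_rank (T:=T))%N.
Proof.
move=> Hc; rewrite /poset_rank.
exact: (@leq_bigmax_cond _ (fun c : {set T} => is_chain c) (fun c : {set T} => #|c|.-1)).
Qed.

Lemma nkchain_big k (p : T) : (poset_rank (T:=T) < k)%N -> nkchain k p = 0%N.
Proof.
move=> Hk; apply/eqP; rewrite cards_eq0; apply/eqP/setP => c; rewrite !inE.
apply/negbTE/negP => /andP [/andP [Hc /eqP Hs] _].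
by have := chain_rank Hc; rewrite Hs /= leqNgt Hk.
Qed.

Lemma double_count k :
  (\sum_(q : T) nkchain k q)%N = (#|[set c : {set T} | is_kchain k c]| * k.+1)%N.
Proof.
rewrite /nkchain.
under eq_bigr => q _ do rewrite -sum1_card big_mkcond.
rewrite exchange_big /= -sum_nat_const [RHS]big_mkcond /=; apply: eq_bigr => c _.
rewrite inE; case Hk: (is_kchain k c).
  have Hk' := Hk; case/andP: Hk' => _ /eqP <-; rewrite -sum1_card [RHS]big_mkcond /=.
  by apply: eq_bigr => q _; rewrite !inE Hk.
by apply: big1 => q _; rewrite !inE Hk.
Qed.

Lemma E_chainE k : E_chain T k = weighted (nkchain k).
Proof.
have e : ((k.+1)%:R * (#|[set c : {set T} | is_kchain k c]|)%:R =
   \sum_(q : T) (nkchain k q)%:R :> rat)%R.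
  by rewrite -natr_sum double_count natrM mulrC.
by rewrite /E_chain /weighted e.
Qed.

Lemma sum_card0 (F : T -> nat) : #|T| = 0%N -> (\sum_(x : T) F x)%N = 0%N.
Proof. by move=> H; rewrite big_pred0 // => x; apply: (card0_eq H). Qed.

Lemma key (w : T -> nat) E :
  (weighted w = E \/ (forall p, w p = 0%N)) ->
  ((\sum_(p : T) (ddeg p * w p)%N)%:R = E * (\sum_(q : T) w q)%:R)%R.
Proof.
have Hz : (\sum_(q : T) w q)%N = 0%N -> (\sum_(p : T) (ddeg p * w p))%N = 0%N.
  move/eqP; rewrite sum_nat_eq0 => /forallP H.
  by apply: big1 => p _; move/eqP: (H p) => ->; rewrite muln0.
case: (eqVneq (\sum_(q : T) w q)%N 0%N) => [e0|ne0].
  by rewrite e0 Hz // mulr0.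
case=> [<-|H0]; last first.
  by move: ne0; rewrite big1 // => p _; rewrite H0.
rewrite weightedE mulrAC -mulrA divff ?mulr1 //.
by rewrite pnatr_eq0.
Qed.

Lemma keyU E : E_uni T = E -> ((\sum_(p : T) ddeg p)%:R = E * #|T|%:R)%R.
Proof.
move=> <-; rewrite E_uniE.
case: (eqVneq #|T| 0%N) => [e0|ne0].
  by rewrite e0 sum_card0 // mulr0.
by rewrite mulrAC -mulrA divff ?mulr1 // pnatr_eq0.
Qed.

End Gen.

Section Sum.
Context {d1 d2 : Order.disp_t} (P : finPOrderType d1) (Q : finPOrderType d2).

Lemma inl_le (a b : P) : ((inl a : dsum P Q) <= inl b)%O = (a <= b)%O.
Proof. by []. Qed.
Lemma inr_le (a b : Q) : ((inr a : dsum P Q) <= inr b)%O = (a <= b)%O.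
Proof. by []. Qed.
Lemma inl_cl (a : P) (y : dsum P Q) : (((inl a : dsum P Q) <= y)%O || (y <= inl a)%O) -> exists b, y = inl b.
Proof. by case: y => // b; exists b. Qed.
Lemma inr_cl (a : Q) (y : dsum P Q) : (((inr a : dsum P Q) <= y)%O || (y <= inr a)%O) -> exists b, y = inr b.
Proof. by case: y => // b; exists b. Qed.

Definition inlI : injective (inl : P -> dsum P Q) := fun _ _ e => ltac:(by case: e).
Definition inrI : injective (inr : Q -> dsum P Q) := fun _ _ e => ltac:(by case: e).

Lemma bigD (F : dsum P Q -> nat) :
  (\sum_(x : dsum P Q) F x = \sum_(p : P) F (inl p) + \sum_(q : Q) F (inr q))%N.
Proof. exact: big_sumType. Qed.

Lemma card_dsum : #|(dsum P Q : finType)| = (#|P| + #|Q|)%N.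
Proof. exact: card_sum. Qed.

Lemma rank_dsum k : (k <= poset_rank (T := dsum P Q))%N ->
  (k <= poset_rank (T:=P))%N \/ (k <= poset_rank (T:=Q))%N.
Proof.
move=> Hk.
have : (poset_rank (T := dsum P Q) <= maxn (poset_rank (T:=P)) (poset_rank (T:=Q)))%N.
  rewrite /poset_rank; apply/bigmax_leqP => c Hc.
  case: (set_0Vmem c) => [->|[x xc]]; first by rewrite cards0.
  case: x xc => a xc.
    exact: leq_trans (rank_chain inlI inl_le inl_cl Hc xc) (leq_maxl _ _).
  exact: leq_trans (rank_chain inrI inr_le inr_cl Hc xc) (leq_maxr _ _).
move=> H; have := leq_trans Hk H; rewrite leq_max => /orP [] ?; by [left|right].
Qed.

Lemma combine (w : dsum P Q -> nat) (wP : P -> nat) (wQ : Q -> nat) E :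
 (forall p, w (inl p) = wP p) -> (forall q, w (inr q) = wQ q) ->
 E_uni P = E -> E_uni Q = E ->
 (weighted wP = E \/ (forall p, wP p = 0%N)) ->
 (weighted wQ = E \/ (forall q, wQ q = 0%N)) ->
 (weighted wP = E \/ weighted wQ = E) ->
 weighted w = E_uni (dsum P Q).
Proof.
move=> hl hr uP uQ HP HQ HB.
have kP := key HP; have kQ := key HQ; have UP := keyU uP; have UQ := keyU uQ.
rewrite weightedE E_uniE !bigD card_dsum.
under eq_bigr => p _ do rewrite (ddeg_f inlI inl_le inl_cl) hl.
under [X in (_ + X)%N]eq_bigr => p _ do rewrite (ddeg_f inrI inr_le inr_cl) hr.
have e1 : (\sum_(p : P) w (inl p) = \sum_(p : P) wP p)%N by apply: eq_bigr => p _.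
have e2 : (\sum_(q : Q) w (inr q) = \sum_(q : Q) wQ q)%N by apply: eq_bigr => p _.
have e3 : (\sum_(p : P) ddeg (inl p : dsum P Q) = \sum_(p : P) ddeg p)%N
  by apply: eq_bigr => p _; rewrite (ddeg_f inlI inl_le inl_cl).
have e4 : (\sum_(q : Q) ddeg (inr q : dsum P Q) = \sum_(q : Q) ddeg q)%N
  by apply: eq_bigr => p _; rewrite (ddeg_f inrI inr_le inr_cl).
rewrite e1 e2 e3 e4.
rewrite !natrD kP kQ UP UQ -!mulrDr -!natrD.
set WP := (\sum_(q : P) wP q)%N; set WQ := (\sum_(q : Q) wQ q)%N.
case: (eqVneq (WP + WQ)%N 0%N) => [e0|ne0].
  have [eP eQ] : WP = 0%N /\ WQ = 0%N by move: e0; case: WP; case: WQ.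
  have E0 : E = 0%R.
    case: HB => <-; rewrite weightedE; [rewrite -/WP eP | rewrite -/WQ eQ];
      by rewrite invr0 mulr0.
  by rewrite E0 !mul0r.
have nz : (#|P| + #|Q|)%N != 0%N.
  apply: contra ne0; rewrite addn_eq0 => /andP [/eqP a /eqP b].
  by rewrite /WP /WQ !sum_card0.
by rewrite -!mulrA !divff ?mulr1 // pnatr_eq0.
Qed.

End Sum.

Theorem mainTheorem2 (d1 d2 : Order.disp_t)
  (P : finPOrderType d1) (Q : finPOrderType d2) :
  E_uni P = E_uni Q ->
  (CDE P -> CDE Q -> CDE (dsum P Q)) /\
  (mCDE P -> mCDE Q -> mCDE (dsum P Q)).
Proof.
move=> EPQ; split.
  move=> cP cQ; rewrite /CDE.
  apply: (@combine _ _ P Q nmax nmax nmax (E_uni P)) => //.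
  - by move=> p; rewrite (nmax_f (@inlI _ _ P Q) (@inl_le _ _ P Q) (@inl_cl _ _ P Q)).
  - by move=> p; rewrite (nmax_f (@inrI _ _ P Q) (@inr_le _ _ P Q) (@inr_cl _ _ P Q)).
  - by left.
  - by left; rewrite EPQ.
  - by left.
move=> mP mQ k Hk; rewrite E_chainE.
have HP' : (k <= poset_rank (T:=P))%N -> weighted (nkchain (T:=P) k) = E_uni P.
  by move=> h; rewrite -E_chainE mP.
have HQ' : (k <= poset_rank (T:=Q))%N -> weighted (nkchain (T:=Q) k) = E_uni P.
  by move=> h; rewrite -E_chainE mQ.
apply: (@combine _ _ P Q (nkchain k) (nkchain k) (nkchain k) (E_uni P)) => //.
- by move=> p; rewrite (nkchain_f (@inlI _ _ P Q) (@inl_le _ _ P Q) (@inl_cl _ _ P Q)).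
- by move=> p; rewrite (nkchain_f (@inrI _ _ P Q) (@inr_le _ _ P Q) (@inr_cl _ _ P Q)).
- case: (leqP k (poset_rank (T:=P))) => h; first by left; apply: HP'.
  by right => p; apply: nkchain_big.
- case: (leqP k (poset_rank (T:=Q))) => h; first by left; apply: HQ'.
  by right => p; apply: nkchain_big.
- by case: (rank_dsum Hk) => h; [left; apply: HP' | right; apply: HQ'].
Qed.
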